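(* Let $X$, $Z$ be topological vector spaces, $C\subseteq Z$ a nonempty closed convex cone with $C^-\neq\{0\}$, and $f:X\to\mathcal{F}(Z,C)$ convex. If $f$ is efficient at $x_0\in X$, then $f$ is lower continuous at $x_0$.
   Context: $\mathcal{F}(Z,C)=\{A\subseteq Z\colon A=\operatorname{cl}(A+C)\}$ (empty set included); $C^-=\{z^*\in Z^*\colon z^*(z)\le0\ \forall z\in C\}$. $f$ is convex iff $tf(x_1)+(1-t)f(x_2)\subseteq f(tx_1+(1-t)x_2)$ for all $x_1,x_2\in X$, $t\in(0,1)$. $f$ is efficient at $x_0$ iff there exist a neighborhood $U$ of $x_0$ and a bounded set $B\subseteq Z$ (absorbed by every neighborhood of $0$) with $f(x)\cap B\neq\emptyset$ for all $x\in U$. $f$ is lower continuous at $x_0$ iff for every $z_0\in f(x_0)$ and every neighborhood $V$ of $z_0$ there is a neighborhood $U$ of $x_0$ with $f(x)\cap V\neq\emptyset$ for all $x\in U$. *)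

(* Defs.v *)
From HB Require Import structures.
From mathcomp Require Import all_boot all_order all_algebra.
From mathcomp Require Import all_classical all_reals all_analysis.
Set Implicit Arguments. Unset Strict Implicit. Unset Printing Implicit Defensive.
Import Order.TTheory GRing.Theory Num.Theory.
Local Open Scope classical_set_scope.
Local Open Scope ring_scope.

Section defs.
Context {R : realType}.

Definition set_add {Z : lmodType R} (A B : set Z) : set Z :=
  [set z | exists a b, A a /\ B b /\ z = a + b].

Definition set_scale {Z : lmodType R} (t : R) (A : set Z) : set Z :=
  [set t *: a | a in A].

Definition convex_cone {Z : lmodType R} (C : set Z) : Prop :=
  (forall t z, 0 < t -> C z -> C (t *: z)) /\
  (forall t x y, 0 <= t <= 1 -> C x -> C y -> C (t *: x + (1 - t) *: y)).

(* C^- <> {0} : some nonzero continuous linear functional z* on Z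
   satisfies z*(z) <= 0 for all z in C *)
Definition negative_dual_nontrivial {Z : topologicalLmodType R} (C : set Z)
  : Prop :=
  exists zs : {linear Z -> R^o},
    continuous (zs : Z -> R^o) /\ (exists z, zs z != 0) /\
    (forall z, C z -> zs z <= 0).

Definition in_FZC {Z : topologicalLmodType R} (C : set Z) (A : set Z) : Prop :=
  A = closure (set_add A C).

Definition sv_convex {X Z : lmodType R} (f : X -> set Z) : Prop :=
  forall x1 x2 t, 0 < t < 1 ->
    set_add (set_scale t (f x1)) (set_scale (1 - t) (f x2))
      `<=` f (t *: x1 + (1 - t) *: x2).

Definition tvs_bounded {Z : topologicalLmodType R} (B : set Z) : Prop :=
  forall V, nbhs (0 : Z) V -> exists r : R, forall t, r < t -> B `<=` set_scale t V.

Definition sv_efficient_at {X Z : topologicalLmodType R} (f : X -> set Z) (x0 : X)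
  : Prop :=
  exists U B, nbhs x0 U /\ tvs_bounded B /\
    forall x, U x -> f x `&` B !=set0.

Definition sv_lower_continuous_at {X Z : topologicalLmodType R}
  (f : X -> set Z) (x0 : X) : Prop :=
  forall z0, f x0 z0 -> forall V, nbhs z0 V ->
    exists U, nbhs x0 U /\ forall x, U x -> f x `&` V !=set0.

End defs.

(* Main.v *)
Require Import Defs.
From HB Require Import structures.
From mathcomp Require Import all_boot all_order all_algebra.
From mathcomp Require Import all_classical all_reals all_analysis.
Import Order.TTheory GRing.Theory Num.Theory.
Local Open Scope classical_set_scope.
Local Open Scope ring_scope.

Lemma cont_l (T1 T2 T3 : topologicalType) (h : T1 * T2 -> T3) a b P :
  continuous h -> nbhs (h (a, b)) P -> nbhs a [set x | P (h (x, b))].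
Proof.
move=> hc /(hc (a, b)) [B [B1 B2] BU].
apply: filterS B1 => x Bx.
exact: (BU (x, b)) (conj Bx (nbhs_singleton B2)).
Qed.

Lemma cont_r (T1 T2 T3 : topologicalType) (h : T1 * T2 -> T3) a b P :
  continuous h -> nbhs (h (a, b)) P -> nbhs b [set y | P (h (a, y))].
Proof.
move=> hc /(hc (a, b)) [B [B1 B2] BU].
apply: filterS B2 => y By.
exact: (BU (a, y)) (conj (nbhs_singleton B1) By).
Qed.

Theorem mainTheorem3 (R : realType) (X Z : topologicalLmodType R)
  (C : set Z) (f : X -> set Z) (x0 : X) :
  C !=set0 -> closed C -> convex_cone C -> negative_dual_nontrivial C ->
  (forall x, in_FZC C (f x)) -> sv_convex f ->
  sv_efficient_at f x0 -> sv_lower_continuous_at f x0.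
Proof.
move=> _ _ _ _ _ fconv [U0 [B [U0x0 [Bbd UB]]]] z0 fz0 V Vz0.
have := @add_continuous Z (z0, 0).
move=> /(_ V); rewrite /= addr0 => /(_ Vz0) [[A W1] [/= A1 W11] AW].
have W2n : nbhs (0 : Z) [set y | A (z0 + y)].
  by apply: (@cont_r _ _ _ (fun p : Z * Z => p.1 + p.2) z0 0 A
    (@add_continuous Z)); rewrite /= addr0.
have Utn : nbhs (0 : R^o) [set t : R^o | [set y | A (z0 + y)] (t *: - z0)].
  by apply: (@cont_l _ _ _ (fun p : R^o * Z => p.1 *: p.2) 0 (- z0) _
    (@scale_continuous R Z)); rewrite /= scale0r.
move/nbhs_ballP: Utn => [e e0 eU].
have [r Br] := Bbd _ W11.
pose s : R := `|r| + 1 + e^-1.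
have s0 : 0 < s by rewrite /s; apply: addr_gt0; [apply: ltr_wpDl|rewrite invr_gt0].
have rs : r < s.
  rewrite /s -addrA; apply: (le_lt_trans (ler_norm r)); rewrite ltrDl.
  by apply: addr_gt0 => //; rewrite invr_gt0.
pose t : R := s^-1.
have ts : t * s = 1 by rewrite /t mulVf // gt_eqF.
have te : t < e.
  rewrite /t invf_plt ?posrE //.
  by rewrite /s ltrDr; apply: ltr_wpDl.
have t01 : 0 < t < 1.
  rewrite /t invr_gt0 s0 /= invf_lt1 //.
  by rewrite /s -addrA; apply: ltr_wpDl => //; rewrite ltrDl invr_gt0.
have At : A (z0 + t *: - z0).
  apply: (eU t); rewrite /ball /= sub0r normrN gtr0_norm //.
  by case/andP: t01.
have U1 : nbhs x0 [set x | U0 (s *: (x - x0) + x0)].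
  have P1 : nbhs (0 : X) [set y | U0 (y + x0)].
    have H := @cont_l _ _ _ (fun p : X * X => p.1 + p.2) 0 x0 U0
      (@add_continuous X).
    by rewrite /= add0r in H; exact: H.
  have P2 : nbhs (0 : X) [set y | U0 (s *: y + x0)].
    have H := @cont_r _ _ _ (fun p : R^o * X => p.1 *: p.2) s 0
      [set z | U0 (z + x0)] (@scale_continuous R X).
    by rewrite /= scaler0 in H; exact: H.
  have H := @cont_l _ _ _ (fun p : X * X => p.1 - p.2) x0 x0
      [set y | U0 (s *: y + x0)] (@sub_continuous X).
  by rewrite /= subrr in H; exact: H.
exists [set x | U0 (s *: (x - x0) + x0)]; split => // x Ux.
have [b [fb Bb]] := UB _ Ux.
have [w Ww bw] := Br s rs b Bb.
have xe : t *: (s *: (x - x0) + x0) + (1 - t) *: x0 = x.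
  by rewrite scalerDr scalerA ts scale1r scalerBl scale1r addrA addrAC addrK subrK.
exists (t *: b + (1 - t) *: z0); split.
  rewrite -xe; apply: fconv => //.
  exists (t *: b), ((1 - t) *: z0); split; first by exists b.
  by split => //; exists z0.
have -> : t *: b + (1 - t) *: z0 = (z0 + t *: - z0) + w.
  by rewrite -bw scalerA ts scale1r scalerBl scale1r scalerN addrC.
exact: (AW (z0 + t *: - z0, w) (conj At Ww)).
Qed.
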